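(* Let $G=(V,E,w)$ be a finite undirected graph with positive vertex weights and let $IS$ and $S$ be independent sets of $G$. (a) Suppose there is $I_w\in A_I$ with $IS\subseteq I_w$. If $IS'\subseteq N(IS)$ is an independent set with $w(IS')>w(IS\cap N(IS'))$, then there exists an independent set $IS''\subseteq N(IS')\setminus N[IS]$ such that $w(IS')\le w(IS\cap N(IS'))+w(IS'')$. Moreover, if there is exactly one independent set $IS''\subseteq N(IS')\setminus N[IS]$ satisfying this inequality, then $IS\cup IS''\subseteq I_w$. (b) Suppose $S$ is contained in every MWIS of $G$. Then for every nonempty independent set $S'\subseteq N(S)$ there is an independent set $S''\subseteq N(S')\setminus N[S]$ such that $w(S')<w(S\cap N(S'))+w(S'')$. Moreover, if there is exactly one independent set $S''\subseteq N(S')\setminus N[S]$ satisfying this strict inequality, then $S\cup S''$ is contained in every MWIS of $G$.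
   Context: $G=(V,E,w)$ is a finite simple undirected graph with $w:V\to\mathbb{R}^{+}$. For $S\subseteq V$, $w(S)=\sum_{v\in S}w(v)$ (so $w(\emptyset)=0$). Independent sets are sets of pairwise non-adjacent vertices; the empty set is independent. A MWIS is an independent set of maximum total weight; $A_I$ is the set of all MWISs. $N(S)=\big(\bigcup_{v\in S}N(v)\big)\setminus S$ and $N[S]=N(S)\cup S$. *)

(* Defs.v *)
(* A finite simple undirected graph is a symmetric,
   irreflexive relation e on a finType T; vertex weights w : T -> R. *)
From mathcomp Require Import all_boot all_order all_algebra.
Set Implicit Arguments. Unset Strict Implicit. Unset Printing Implicit Defensive.
Import Order.TTheory GRing.Theory Num.Theory.
Local Open Scope ring_scope.

Definition independent (T : finType) (e : rel T) (S : {set T}) : bool :=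
  [forall x in S, forall y in S, ~~ e x y].

Definition wt (R : numDomainType) (T : finType) (w : T -> R) (S : {set T}) : R :=
  \sum_(x in S) w x.

(* I is a maximum weight independent set (I \in A_I) *)
Definition is_MWIS (R : numDomainType) (T : finType) (e : rel T) (w : T -> R)
  (I : {set T}) : Prop :=
  independent e I /\ forall J : {set T}, independent e J -> wt w J <= wt w I.

Definition nbh (T : finType) (e : rel T) (S : {set T}) : {set T} :=
  [set y | [exists x in S, e x y]] :\: S.

Definition cnbh (T : finType) (e : rel T) (S : {set T}) : {set T} :=
  nbh e S :|: S.

(* Main.v *)
Require Import Defs.
From mathcomp Require Import all_boot all_order all_algebra.
Import Order.TTheory GRing.Theory Num.Theory.
Local Open Scope ring_scope.

Section Aux.
Variables (R : realFieldType) (T : finType) (e : rel T) (w : T -> R).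
Hypothesis e_sym : symmetric e.

Lemma indepP (A : {set T}) :
  reflect (forall x y, x \in A -> y \in A -> ~~ e x y) (independent e A).
Proof.
apply: (iffP forallP) => [H x y xA yA | H x].
  by move: (H x); rewrite xA => /forall_inP /(_ y yA).
by apply/implyP => xA; apply/forall_inP => y yA; apply: H.
Qed.

Lemma indep_sub {A B : {set T}} : A \subset B -> independent e B -> independent e A.
Proof.
move=> /subsetP AB /indepP H; apply/indepP => x y xA yA; apply: H; exact: AB.
Qed.

Lemma wt_split (A B : {set T}) : wt w A = wt w (A :&: B) + wt w (A :\: B).
Proof. by rewrite /wt (big_setID B). Qed.

Lemma exists_MWIS : exists I, is_MWIS e w I.
Proof.
have i0 : independent e set0 by apply/indepP => x y; rewrite inE.
case: (@arg_maxP _ _ _ set0 (independent e) (wt w) i0) => I HI Hmax.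
by exists I; split => // J HJ; apply: Hmax.
Qed.

Lemma key (I S S' : {set T}) : is_MWIS e w I -> S \subset I ->
  S' \subset nbh e S -> independent e S' ->
  let X := (I :&: nbh e S') :\: cnbh e S in
  [/\ X \subset nbh e S' :\: cnbh e S, independent e X,
      wt w S' <= wt w (S :&: nbh e S') + wt w X &
      (wt w S' = wt w (S :&: nbh e S') + wt w X ->
         is_MWIS e w ((I :\: nbh e S') :|: S'))].
Proof.
move=> [IndI maxI] SI S'N IndS' X.
have IN : forall x, x \in I -> x \notin nbh e S.
  move=> x xI; apply/negP; rewrite inE => /andP [_]; rewrite inE.
  case/existsP => y /andP [yS eyx].
  by move/indepP: IndI => /(_ y x (subsetP SI y yS) xI); rewrite eyx.
have S'I : forall x, x \in S' -> x \notin I.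
  by move=> x xS'; apply/negP => xI; move: (IN x xI); rewrite (subsetP S'N x xS').
set J := (I :\: nbh e S') :|: S'.
have IndJ : independent e J.
  apply/indepP => x y; rewrite !inE => /orP [/andP [xN xI] | xS'] /orP [/andP [yN yI] | yS'].
  - by move/indepP: IndI; apply.
  - apply/negP => exy; move: xN; rewrite negb_and negbK.
    case/orP => [xS' | /negP]; first by move: (S'I x xS'); rewrite xI.
    apply; apply/existsP; exists y; by rewrite yS' e_sym.
  - apply/negP => exy; move: yN; rewrite negb_and negbK.
    case/orP => [yS' | /negP]; first by move: (S'I y yS'); rewrite yI.
    apply; apply/existsP; exists x; by rewrite xS'.
  - by move/indepP: IndS'; apply.
have wJ : wt w J = wt w (I :\: nbh e S') + wt w S'.
  rewrite (wt_split J (I :\: nbh e S')).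
  have -> : J :&: (I :\: nbh e S') = I :\: nbh e S' by rewrite /J setIUl setIid; apply/setUidPl/subsetP => x; rewrite !inE => /andP [xS' /andP [_ xI]]; move: (S'I x xS'); rewrite xI.
  congr (_ + _); congr (wt w _); apply/setP => x; rewrite !inE.
  case xS2: (x \in S'); last by rewrite orbF andNb.
  by rewrite (negbTE (S'I x xS2)) !andbF orbT.
have E : (I :&: nbh e S') :&: cnbh e S = S :&: nbh e S'.
  apply/setP => x; rewrite /cnbh !in_setI in_setU.
  case xS: (x \in S); first by rewrite (subsetP SI x xS) orbT andbT.
  rewrite orbF /=; case xI: (x \in I) => //=.
  by rewrite (negbTE (IN x xI)) andbF.
have wI : wt w I = wt w (I :\: nbh e S') + wt w (S :&: nbh e S') + wt w X.
  rewrite (wt_split I (nbh e S')) (wt_split (I :&: nbh e S') (cnbh e S)) E -/X.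
  by rewrite addrC addrA.
have HX : X \subset nbh e S' :\: cnbh e S.
  by apply/subsetP => x /setDP [/setIP [_ xN] xC]; apply/setDP.
split => //.
- by apply: (indep_sub _ IndI); apply/subsetP => x /setDP [/setIP [xI _] _].
- move: (maxI J IndJ); rewrite wJ wI -addrA lerD2l //.
- move=> Heq; split => // K HK; rewrite wJ Heq addrA -wI; exact: maxI.
Qed.

End Aux.

Theorem theorem2p2 (R : realFieldType) (T : finType) (e : rel T) (w : T -> R)
  (e_sym : symmetric e) (e_irr : irreflexive e) (w_pos : forall v, 0 < w v)
  (IS S : {set T}) (hIS : independent e IS) (hS : independent e S) :
  (* (a) *)
  (forall Iw : {set T}, is_MWIS e w Iw -> IS \subset Iw ->
   forall IS' : {set T}, IS' \subset nbh e IS -> independent e IS' ->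
     wt w (IS :&: nbh e IS') < wt w IS' ->
     (exists IS'' : {set T},
        [/\ IS'' \subset nbh e IS' :\: cnbh e IS, independent e IS'' &
            wt w IS' <= wt w (IS :&: nbh e IS') + wt w IS'']) /\
     (forall IS'' : {set T},
        [/\ IS'' \subset nbh e IS' :\: cnbh e IS, independent e IS'' &
            wt w IS' <= wt w (IS :&: nbh e IS') + wt w IS''] ->
        (forall J : {set T},
           [/\ J \subset nbh e IS' :\: cnbh e IS, independent e J &
               wt w IS' <= wt w (IS :&: nbh e IS') + wt w J] -> J = IS'') ->
        IS :|: IS'' \subset Iw))
  /\
  (* (b) *)
  ((forall I : {set T}, is_MWIS e w I -> S \subset I) ->
   forall S' : {set T}, S' != set0 -> S' \subset nbh e S -> independent e S' ->
     (exists S'' : {set T},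
        [/\ S'' \subset nbh e S' :\: cnbh e S, independent e S'' &
            wt w S' < wt w (S :&: nbh e S') + wt w S'']) /\
     (forall S'' : {set T},
        [/\ S'' \subset nbh e S' :\: cnbh e S, independent e S'' &
            wt w S' < wt w (S :&: nbh e S') + wt w S''] ->
        (forall J : {set T},
           [/\ J \subset nbh e S' :\: cnbh e S, independent e J &
               wt w S' < wt w (S :&: nbh e S') + wt w J] -> J = S'') ->
        forall I : {set T}, is_MWIS e w I -> S :|: S'' \subset I)).
Proof.
split.
  move=> Iw HIw ISI IS' IS'N IndIS' _.
  case: (key _ _ _ _ e_sym _ _ _ HIw ISI IS'N IndIS') => H1 H2 H3 _.
  split; first by exists ((Iw :&: nbh e IS') :\: cnbh e IS).
  move=> IS'' _ Huniq; rewrite -(Huniq _ (And3 H1 H2 H3)).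
  by rewrite subUset ISI; apply/subsetP => x; rewrite !inE => /andP [_ /andP [->]].
move=> Sall S' S'ne S'N IndS'.
have strict : forall I, is_MWIS e w I ->
    let X := (I :&: nbh e S') :\: cnbh e S in
    [/\ X \subset nbh e S' :\: cnbh e S, independent e X &
        wt w S' < wt w (S :&: nbh e S') + wt w X].
  move=> I HI X; case: (key _ _ _ _ e_sym _ _ _ HI (Sall I HI) S'N IndS') => H1 H2 H3 H4.
  split => //; rewrite lt_neqAle H3 andbT; apply/eqP => Heq.
  have HJ := H4 Heq; have SJ := Sall _ HJ.
  case/set0Pn: S'ne => x xS'.
  move: (subsetP S'N x xS'); rewrite !inE => /andP [_ /existsP [y /andP [yS eyx]]].
  case: HJ => /indepP /(_ y x) IndJ _.
  move: (IndJ (subsetP SJ y yS)); rewrite eyx inE xS' orbT => /(_ isT).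
  by [].
split.
  have [I HI] := exists_MWIS R T e w.
  by exists ((I :&: nbh e S') :\: cnbh e S); apply: strict.
move=> S'' _ Huniq I HI; rewrite -(Huniq _ (strict I HI)).
by rewrite subUset (Sall I HI); apply/subsetP => x; rewrite !inE => /andP [_ /andP [->]].
Qed.
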